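(* Let $\omega\in S_n$ avoid the pattern $231$. Then for any $i\neq j$ with $c_i(\omega),c_j(\omega)>0$, every element of $C_i(\omega)$ is incomparable with every element of $C_j(\omega)$; consequently $M_\omega$ is a disjoint union of the chains $C_i(\omega)$.
   Context: Permutations $\omega\in S_n$ are written in one-line notation. Let ${\rm Inv}(\omega)=\{(i,j): 1\le i<j\le n,\ \omega(i)>\omega(j)\}$, $c_i(\omega)=\#\{j: i<j\le n,\ \omega(i)>\omega(j)\}$, and for $i<j$, $c_{i,j}(\omega)=\#\{k: i<k<j,\ \omega(i)>\omega(k)\}$; $[m]=\{1,\dots,m\}$. For $i$ with $c_i(\omega)>0$ and $x\in[c_i(\omega)]$, $m_{i,x}(\omega)\in\mathbb{N}^n$ has $j$-th coordinate $0$ if $j<i$; $x$ if $j=i$; $0$ if $j>i$ and $(i,j)\in{\rm Inv}(\omega)$; $\max\{0,x-c_{i,j}(\omega)\}$ if $j>i$ and $(i,j)\notin{\rm Inv}(\omega)$. $M_\omega$ is the set of all $m_{i,x}(\omega)$ with the product order on $\mathbb{N}^n$, and $C_i(\omega)=\{m_{i,x}(\omega): x\in[c_i(\omega)]\}$ (a chain). $\omega$ avoids $231$ if there are no $i<j<l$ with $\omega(l)<\omega(i)<\omega(j)$. *)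

(* Defs.v *)
(* Permutations of 'I_n (0-based positions/values). *)
From mathcomp Require Import all_boot all_order all_fingroup.
Set Implicit Arguments. Unset Strict Implicit. Unset Printing Implicit Defensive.

Definition natvec (n : nat) := {ffun 'I_n -> nat}.

Definition vle n (a b : natvec n) : bool := [forall k, a k <= b k].

Definition incomparable n (a b : natvec n) : bool := ~~ vle a b && ~~ vle b a.

Definition is_inv n (w : 'S_n) (i j : 'I_n) : bool := (i < j) && (w j < w i).

Definition cc n (w : 'S_n) (i : 'I_n) : nat := #|[set j | is_inv w i j]|.

Definition cij n (w : 'S_n) (i j : 'I_n) : nat :=
  #|[set k : 'I_n | (i < k) && (k < j) && (w k < w i)]|.

(* m_{i,x}(w); note (x - c) in nat is max{0, x - c}. *)
Definition mvec n (w : 'S_n) (i : 'I_n) (x : nat) : natvec n :=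
  [ffun j : 'I_n =>
     if j < i then 0
     else if j == i then x
     else if is_inv w i j then 0
     else x - cij w i j].

Definition Cchain n (w : 'S_n) (i : 'I_n) : seq (natvec n) :=
  [seq mvec w i x | x <- iota 1 (cc w i)].

Definition Mset n (w : 'S_n) : seq (natvec n) :=
  flatten [seq Cchain w i | i <- enum 'I_n].

Definition avoids231 n (w : 'S_n) : bool :=
  ~~ [exists i : 'I_n, exists j : 'I_n, exists l : 'I_n,
        [&& i < j, j < l, w l < w i & w i < w j]].

(* Main.v *)
Require Import Defs.
From mathcomp Require Import all_boot all_order all_fingroup.

Lemma key n (w : 'S_n) (i j : 'I_n) x :
  avoids231 w -> (i < j)%N -> ~~ is_inv w i j -> (x <= cc w i)%N ->
  mvec w i x j = 0.
Proof.
move=> av ij ninv xc.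
rewrite /mvec ffunE ltnNge (ltnW ij) /= (negbTE ninv).
have -> : (j == i) = false by apply/negbTE; rewrite neq_ltn ij orbT.
apply/eqP; rewrite subn_eq0; apply: (leq_trans xc).
rewrite /cc /cij; apply: subset_leq_card; apply/subsetP => k.
rewrite !inE /is_inv => /andP [ik wki]; rewrite ik wki /= andbT.
have wij : w i < w j.
  move: ninv; rewrite /is_inv ij /= -leqNgt leq_eqVlt => /orP [/eqP E|//].
  by move: E => /val_inj/perm_inj E; move: ij; rewrite E ltnn.
case: (ltnP k j) => // jk; exfalso.
move: av => /negP; apply; apply/existsP; exists i; apply/existsP; exists j.
apply/existsP; exists k; rewrite ij wki wij /= andbT.
rewrite ltn_neqAle jk andbT; apply/eqP => E.
by move: wki; rewrite -(val_inj E) => /(ltn_trans wij); rewrite ltnn.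
Qed.

Lemma incomp_lt n (w : 'S_n) (i j : 'I_n) x y :
  avoids231 w -> (i < j)%N -> (0 < x)%N -> (x <= cc w i)%N -> (0 < y)%N ->
  incomparable (mvec w i x) (mvec w j y).
Proof.
move=> av ij x0 xc y0; apply/andP; split; apply/negP => /forallP H.
- have := H i; rewrite /mvec !ffunE ltnn eqxx ij.
  by rewrite leqn0 => /eqP E; move: x0; rewrite E.
- have := H j; have := @key n w i j x av ij; rewrite /mvec !ffunE ltnn eqxx.
  case: (boolP (is_inv w i j)) => [inv _|ninv /(_ isT xc) ->].
  + have ji : (j == i) = false by apply/negbTE; rewrite neq_ltn ij orbT.
    rewrite ltnNge (ltnW ij) /= ji ?inv leqn0 => /eqP E; move: y0; by rewrite E.
  + by rewrite leqn0 => /eqP E; move: y0; rewrite E.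
Qed.

Lemma memC n (w : 'S_n) (i : 'I_n) a :
  a \in Cchain w i -> exists2 x, (0 < x <= cc w i)%N & a = mvec w i x.
Proof.
move=> /mapP [x]; rewrite mem_iota add1n ltnS => H E; by exists x.
Qed.

Lemma incompS n (a b : natvec n) : incomparable a b -> incomparable b a.
Proof. by rewrite /incomparable andbC. Qed.

Lemma part1 n (w : 'S_n) : avoids231 w ->
  forall i j : 'I_n, i != j -> 
     forall a b, a \in Cchain w i -> b \in Cchain w j -> incomparable a b.
Proof.
move=> av i j ij a b /memC [x /andP [x0 xc] ->] /memC [y /andP [y0 yc] ->].
case: (ltngtP i j) => h.
- exact: incomp_lt.
- by apply: incompS; apply: incomp_lt.
- by move: ij; rewrite (val_inj h) eqxx.
Qed.

Lemma vle_refl n (a : natvec n) : vle a a.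
Proof. by apply/forallP => k. Qed.

Theorem mainTheorem2 (n : nat) (w : 'S_n) :
  avoids231 w ->
  (* elements of distinct chains are incomparable *)
  (forall i j : 'I_n, i != j -> 0 < cc w i -> 0 < cc w j ->
     forall a b, a \in Cchain w i -> b \in Cchain w j -> incomparable a b) /\
  (* consequently M_w is a disjoint union of the chains C_i(w):
     every element of M_w lies in exactly one C_i(w), and each C_i(w) is a chain *)
  (forall a, a \in Mset w -> exists! i : 'I_n, a \in Cchain w i) /\
  (forall i : 'I_n, forall a b, a \in Cchain w i -> b \in Cchain w i ->
      vle a b || vle b a).
Proof.
move=> av; split; first by move=> i j ij _ _; apply: part1.
split.
- move=> a /flatten_mapP [i _ ai]; exists i; split => // j aj.
  apply/eqP; apply/negPn/negP => ij.
  by have := @part1 n w av i j ij a a ai aj; rewrite /incomparable vle_refl.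
- move=> i a b /memC [x _ ->] /memC [y _ ->].
  wlog xy : x y / (x <= y)%N.
    move=> W; case: (leqP x y) => h; first exact: W.
    by rewrite orbC; apply: W; apply: ltnW.
  apply/orP; left; apply/forallP => k; rewrite /mvec !ffunE.
  case: (k < i)%N => //; case: (k == i) => //; case: (is_inv w i k) => //.
  exact: leq_sub2r.
Qed.
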